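(* Let $E$ be a Banach lattice. Then: (1) every un-convergent net in $E$ has an embedded sequence that is uo-convergent to the same limit. If $E$ has an order continuous norm, then moreover: (2) every un-convergent net in $E$ has an embedded sequence that is uo-convergent as well as un-convergent to the same limit; (3) a sequence in $E$ is un-convergent to $x\in E$ if and only if every subsequence has a further subsequence that is uo-convergent to $x$.
   Context: All vector lattices are real and Archimedean. A net $(x_\alpha)$ in $E$ order converges to $x$ if there is a net $y_\beta\downarrow 0$ such that for each $\beta_0$ there is $\alpha_0$ with $|x_\alpha-x|\leq y_{\beta_0}$ for $\alpha\geq\alpha_0$; it uo-converges to $x$ if $|x_\alpha-x|\wedge|y|$ order converges to $0$ for every $y\in E$. A net $(x_\alpha)$ in a Banach lattice $E$ un-converges to $x$ if $\| |x_\alpha-x|\wedge|y| \|\to0$ for every $y\in E$. Embedded sequence: given a net $(x_\alpha)_{\alpha\in A}$, a sequence $(x_{\alpha_n})_{n\geq1}$ with $\alpha_1\leq\alpha_2\leq\dotsb$ in $A$, where moreover $\alpha_1<\alpha_2<\dotsb$ when $A$ has no largest element (the $\alpha_n$ need not be cofinal). *)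

(* Defs.v *)
From HB Require Import structures.
From mathcomp Require Import all_boot all_order all_algebra.
From mathcomp Require Import all_classical all_reals all_analysis.
Set Implicit Arguments. Unset Strict Implicit. Unset Printing Implicit Defensive.
Import Order.TTheory GRing.Theory Num.Theory.
Import numFieldNormedType.Exports.
Local Open Scope ring_scope.

Record directed_set := DirectedSet {
  dcar :> Type;
  dle : dcar -> dcar -> Prop;
  dle_refl : forall a, dle a a;
  dle_trans : forall a b c, dle a b -> dle b c -> dle a c;
  dinhabited : exists a : dcar, True;
  ddirected : forall a b, exists c, dle a c /\ dle b c
}.

Lemma nat_le_refl (a : nat) : (a <= a)%N. Proof. by []. Qed.
Lemma nat_le_trans (a b c : nat) : (a <= b)%N -> (b <= c)%N -> (a <= c)%N.
Proof. move=> h1 h2; exact: leq_trans h1 h2. Qed.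
Lemma nat_inh : exists a : nat, True. Proof. by exists 0%N. Qed.
Lemma nat_directed (a b : nat) : exists c, (a <= c)%N /\ (b <= c)%N.
Proof. by exists (maxn a b); rewrite leq_maxl leq_maxr. Qed.

Definition nat_dir : directed_set :=
  @DirectedSet nat (fun m n => (m <= n)%N) nat_le_refl nat_le_trans nat_inh
    nat_directed.

Record banach_lattice (R : realType) (E : completeNormedModType R) := BanachLattice {
  ble : E -> E -> Prop;
  bsup : E -> E -> E;
  ble_refl : forall x, ble x x;
  ble_trans : forall x y z, ble x y -> ble y z -> ble x z;
  ble_anti : forall x y, ble x y -> ble y x -> x = y;
  ble_add : forall x y z, ble x y -> ble (x + z) (y + z);
  ble_scale : forall (a : R) x y, 0 <= a -> ble x y -> ble (a *: x) (a *: y);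
  bsup_ubl : forall x y, ble x (bsup x y);
  bsup_ubr : forall x y, ble y (bsup x y);
  bsup_least : forall x y z, ble x z -> ble y z -> ble (bsup x y) z;
  barchimedean : forall x y, ble 0 x -> (forall n : nat, ble (n%:R *: x) y) -> x = 0;
  bnorm_mono : forall x y, ble (bsup x (- x)) (bsup y (- y)) -> `|x| <= `|y|
}.

Section BL.
Variables (R : realType) (E : completeNormedModType R) (B : banach_lattice E).

Definition binf (x y : E) : E := - bsup B (- x) (- y).
Definition babs (x : E) : E := bsup B x (- x).

Definition is_inf_net (D : directed_set) (y : D -> E) (z : E) : Prop :=
  (forall b, ble B z (y b)) /\
  (forall w, (forall b, ble B w (y b)) -> ble B w z).

Definition decr_to_0 (D : directed_set) (y : D -> E) : Prop :=
  (forall b1 b2, dle b1 b2 -> ble B (y b2) (y b1)) /\ is_inf_net y 0.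

Definition order_conv (D : directed_set) (x : D -> E) (l : E) : Prop :=
  exists (D' : directed_set) (y : D' -> E), decr_to_0 y /\
    forall b0, exists a0, forall a, dle a0 a -> ble B (babs (x a - l)) (y b0).

Definition uo_conv (D : directed_set) (x : D -> E) (l : E) : Prop :=
  forall y : E, order_conv (fun a => binf (babs (x a - l)) (babs y)) 0.

Definition un_conv (D : directed_set) (x : D -> E) (l : E) : Prop :=
  forall y : E, forall e : R, 0 < e ->
    exists a0, forall a, dle a0 a -> `| binf (babs (x a - l)) (babs y) | < e.

Definition order_continuous_norm : Prop :=
  forall (D : directed_set) (x : D -> E), decr_to_0 x ->
    forall e : R, 0 < e -> exists a0, forall a, dle a0 a -> `| x a | < e.
End BL.

Definition has_largest (D : directed_set) : Prop :=
  exists m : D, forall a, dle a m.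

Definition embedded (D : directed_set) (al : nat -> D) : Prop :=
  (forall n, dle (al n) (al n.+1)) /\
  (~ has_largest D -> forall n, ~ dle (al n.+1) (al n)).

Definition strictly_incr (phi : nat -> nat) : Prop :=
  forall n, (phi n < phi n.+1)%N.

(* Main.v *)
Require Import Defs.
From HB Require Import structures.
From mathcomp Require Import all_boot all_order all_algebra.
From mathcomp Require Import all_classical all_reals all_analysis.
Import Order.TTheory GRing.Theory Num.Theory.
Import numFieldNormedType.Exports.
Local Open Scope classical_set_scope.
Local Open Scope ring_scope.

Section BLT.
Variables (R : realType) (E : completeNormedModType R) (B : banach_lattice E).
Local Notation le := (ble B).
Local Notation sup := (bsup B).
Local Notation inf := (binf B).
Local Notation abs := (babs B).

Lemma lrefl x : le x x. Proof. exact: ble_refl. Qed.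
Lemma ltr y x z : le x y -> le y z -> le x z. Proof. exact: ble_trans. Qed.
Lemma lanti x y : le x y -> le y x -> x = y. Proof. exact: ble_anti. Qed.
Lemma lD2r z {x y} : le x y -> le (x + z) (y + z). Proof. exact: ble_add. Qed.
Lemma lD2l z {x y} : le x y -> le (z + x) (z + y).
Proof. by rewrite ![z + _]addrC; apply: ble_add. Qed.
Lemma lD x y z w : le x y -> le z w -> le (x + z) (y + w).
Proof. by move=> h1 h2; apply: (ltr (y + z)); [apply: lD2r|apply: lD2l]. Qed.
Lemma lsub0 x y : le 0 (y - x) <-> le x y.
Proof.
split=> h.
  by have := lD2r x h; rewrite add0r subrK.
by have := lD2r (- x) h; rewrite subrr.
Qed.
Lemma lN x y : le x y -> le (- y) (- x).
Proof.
move=> h; have := lD2r (- x - y) h.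
by rewrite addrA subrr add0r addrCA subrr addr0.
Qed.
Lemma lNN x y : le (- x) (- y) <-> le y x.
Proof. by split=> [/lN|/lN//]; rewrite !opprK. Qed.
Lemma lsupl x y : le x (sup x y). Proof. exact: bsup_ubl. Qed.
Lemma lsupr x y : le y (sup x y). Proof. exact: bsup_ubr. Qed.
Lemma lsupP x y z : le x z -> le y z -> le (sup x y) z. Proof. exact: bsup_least. Qed.
Lemma lsup_le x y x' y' : le x x' -> le y y' -> le (sup x y) (sup x' y').
Proof.
move=> h1 h2; apply: lsupP; [apply: ltr h1 _|apply: ltr h2 _];
  [exact: lsupl|exact: lsupr].
Qed.
Lemma supC x y : sup x y = sup y x.
Proof. by apply: lanti; apply: lsupP; (apply: lsupl || apply: lsupr). Qed.
Lemma sup_idr x y : le x y -> sup x y = y.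
Proof. by move=> h; apply: lanti; [apply: lsupP=> //; apply: lrefl|apply: lsupr]. Qed.
Lemma addr_sup z x y : z + sup x y = sup (z + x) (z + y).
Proof.
apply: lanti; last by apply: lsupP; apply: lD2l; [apply: lsupl|apply: lsupr].
have h : le (sup x y) (- z + sup (z + x) (z + y)).
  apply: lsupP.
    by have := lD2l (- z) (lsupl (z + x) (z + y)); rewrite addKr.
  by have := lD2l (- z) (lsupr (z + x) (z + y)); rewrite addKr.
by have := lD2l z h; rewrite addNKr.
Qed.
Lemma linfl x y : le (inf x y) x.
Proof. by rewrite /binf -lNN opprK; apply: lsupl. Qed.
Lemma linfr x y : le (inf x y) y.
Proof. by rewrite /binf -lNN opprK; apply: lsupr. Qed.
Lemma linfP x y z : le z x -> le z y -> le z (inf x y).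
Proof.
move=> h1 h2; rewrite /binf -lNN opprK.
by apply: lsupP; rewrite lNN.
Qed.
Lemma linf_le x y x' y' : le x x' -> le y y' -> le (inf x y) (inf x' y').
Proof.
move=> h1 h2; apply: linfP; [apply: ltr h1|apply: ltr h2];
  [exact: linfl|exact: linfr].
Qed.
Lemma infC x y : inf x y = inf y x. Proof. by rewrite /binf supC. Qed.
Lemma inf_idl x y : le x y -> inf x y = x.
Proof. by move=> h; apply: lanti; [apply: linfl|apply: linfP=> //; apply: lrefl]. Qed.
Lemma addr_inf z x y : z + inf x y = inf (z + x) (z + y).
Proof.
by rewrite /binf !opprD -addr_sup opprD opprK.
Qed.
Lemma sup_inf x y : sup x y + inf x y = x + y.
Proof.
have h : x + y + sup (- x) (- y) = sup y x.
  by rewrite addr_sup addrK addrAC subrr add0r.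
by rewrite /binf supC -h addrK.
Qed.

Lemma lscale a x y : 0 < a -> le (a *: x) (a *: y) <-> le x y.
Proof.
move=> a0; split=> h; last by apply: ble_scale => //; apply: ltW.
have ia : 0 <= a^-1 by rewrite invr_ge0 ltW.
have := ble_scale ia h.
by rewrite !scalerA mulVf ?gt_eqF // !scale1r.
Qed.
Lemma scale_sup a x y : 0 < a -> a *: sup x y = sup (a *: x) (a *: y).
Proof.
move=> a0; apply: lanti; last first.
  by apply: lsupP; rewrite lscale //; [apply: lsupl|apply: lsupr].
have e : a *: (a^-1 *: sup (a *: x) (a *: y)) = sup (a *: x) (a *: y).
  by rewrite scalerA mulfV ?gt_eqF // scale1r.
rewrite -e lscale //; apply: lsupP; rewrite -(lscale _ _ _ a0) e;
  [apply: lsupl|apply: lsupr].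
Qed.
Lemma scale_inf a x y : 0 < a -> a *: inf x y = inf (a *: x) (a *: y).
Proof. by move=> a0; rewrite /binf scalerN scale_sup // !scalerN. Qed.
Lemma scale_ge0 {a x} : 0 <= a -> le 0 x -> le 0 (a *: x).
Proof. by move=> a0 h; have := ble_scale a0 h; rewrite scaler0. Qed.
Lemma lscale_mono {a b x} : a <= b -> le 0 x -> le (a *: x) (b *: x).
Proof.
move=> ab h; apply/lsub0; rewrite -scalerBl; apply: scale_ge0 => //.
by rewrite subr_ge0.
Qed.
Lemma lscale_ge1 {a x} : 1 <= a -> le 0 x -> le x (a *: x).
Proof. by move=> a1 h; have := lscale_mono a1 h; rewrite scale1r. Qed.
Lemma abs_ge0 x : le 0 (abs x).
Proof.
have h : le (- abs x) (abs x).
  by apply: (ltr x); [rewrite -lNN opprK; apply: lsupr|apply: lsupl].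
have := lD2r (abs x) h; rewrite addNr => h2.
have : le ((2:R) *: 0) ((2:R) *: abs x).
  by rewrite scaler0 scaler_nat mulr2n.
by rewrite lscale.
Qed.
Lemma abs_id x : le 0 x -> abs x = x.
Proof. move=> h; rewrite /babs supC sup_idr //; apply: (ltr 0) => //. by rewrite -lNN opprK oppr0. Qed.
Lemma absN x : abs (- x) = abs x.
Proof. by rewrite /babs opprK supC. Qed.
Lemma pos_ge0 x : le 0 (sup x 0). Proof. exact: lsupr. Qed.
Lemma inf_ge0 x y : le 0 x -> le 0 y -> le 0 (inf x y).
Proof. by move=> h1 h2; apply: linfP. Qed.
Lemma le_abs x : le x (abs x). Proof. exact: lsupl. Qed.
Lemma norm_le x y : le 0 x -> le x y -> `|x| <= `|y|.
Proof.
move=> h1 h2; apply: (@bnorm_mono _ _ B x y); change (le (abs x) (abs y)).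
by rewrite !abs_id //; apply: ltr h2.
Qed.
Lemma sup_lip a b c : le (abs (sup a c - sup b c)) (abs (a - b)).
Proof.
have key : forall a b, le (sup a c - sup b c) (abs (a - b)).
  move=> a' b'; apply/lsub0.
  rewrite opprB addrA lsub0 addrC.
  apply: lsupP.
    apply: (ltr (b' + (a' - b'))); first by rewrite addrC subrK; apply: lrefl.
    apply: lD; first exact: lsupl.
    exact: le_abs.
  apply: (ltr (c + 0)); first by rewrite addr0; apply: lrefl.
  apply: lD; first exact: lsupr.
  exact: abs_ge0.
apply: lsupP; first exact: key.
by rewrite opprB -absN opprB; apply: key.
Qed.
Lemma norm_sup_lip a b c : `|sup a c - sup b c| <= `|a - b|.
Proof. exact: (@bnorm_mono _ _ B _ _ (sup_lip a b c)). Qed.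

Lemma inf_addl a b c : le 0 c -> le (inf a (b + c)) (inf a b + c).
Proof.
move=> c0; rewrite [inf a b + c]addrC addr_inf; apply: linf_le; last by rewrite addrC; apply: lrefl.
by apply: (ltr (0 + a)); [rewrite add0r; apply: lrefl|apply: lD2r].
Qed.

Lemma inf_split a Y f : le (inf a Y) (inf a f + sup (Y - f) 0).
Proof.
apply: (ltr (inf a (f + sup (Y - f) 0))); last exact: (inf_addl a f _ (pos_ge0 (Y - f))).
apply: linf_le; first exact: lrefl.
apply: (ltr (f + (Y - f))); first by rewrite addrC subrK; apply: lrefl.
by apply: lD2l; apply: lsupl.
Qed.

Lemma inf_scale_ge1 k x e : 1 <= k -> le 0 x -> le (inf x (k *: e)) (k *: inf x e).
Proof.
move=> k1 x0; have k0 : 0 < k by apply: lt_le_trans k1.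
rewrite scale_inf //; apply: linf_le; last exact: lrefl.
exact: lscale_ge1.
Qed.

Lemma posneg p : inf (sup p 0) (sup (- p) 0) = 0.
Proof.
have h1 : sup p 0 - p = sup (- p) 0 by rewrite addrC addr_sup addNr addr0 supC.
have h2 : sup p 0 + sup (- p) 0 = sup (sup (- p) 0) (sup p 0).
  by rewrite addr_sup addr0 h1.
have := sup_inf (sup p 0) (sup (- p) 0).
rewrite h2 (supC (sup (- p) 0)) => h.
by apply: (addrI (sup (sup p 0) (sup (- p) 0))); rewrite h addr0.
Qed.

Lemma riesz a b c : le 0 a -> le 0 b -> le 0 c ->
  le (inf a (b + c) - inf a b) (inf a c).
Proof.
move=> a0 b0 c0; set s := inf a (b + c).
apply: linfP.
  apply/lsub0; rewrite opprB addrA lsub0.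
  apply: (ltr (a + 0)); first by rewrite addr0; apply: linfl.
  by apply: lD2l; apply: inf_ge0.
rewrite /binf opprK addr_sup; apply: lsupP.
  apply: (ltr 0); last exact: c0.
  by rewrite -(subrr a); apply: lD2r; apply: linfl.
apply: (ltr ((b + c) - b)); first by apply: lD2r; apply: linfr.
by rewrite addrC addKr; apply: lrefl.
Qed.

Lemma disj_abs a b c : le 0 a -> le 0 b -> le 0 c -> inf a c = 0 ->
  le a (b + c) -> le a b.
Proof.
move=> a0 b0 c0 ac h.
have e : inf a (b + c) = a by apply: inf_idl.
have := riesz _ _ _ a0 b0 c0; rewrite e ac => h2.
apply: (ltr (inf a b)); last exact: linfr.
by rewrite -lsub0; move/lN: h2; rewrite oppr0 opprB.
Qed.

Lemma disj_sum a v : inf a v = 0 -> a + v = sup a v.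
Proof. by move=> h; rewrite -sup_inf h addr0. Qed.

Lemma arch_nat x y : le 0 x -> (forall n : nat, le (n%:R *: x) y) -> x = 0.
Proof. exact: barchimedean. Qed.

Lemma arch_eps v p g : le 0 g -> (forall eps : R, 0 < eps -> le v (p + eps *: g)) ->
  le v p.
Proof.
move=> g0 h; set q := sup (v - p) 0.
have hq : forall eps : R, 0 < eps -> le q (eps *: g).
  move=> eps e0; apply: lsupP; last exact: scale_ge0 (ltW e0) g0.
  by rewrite -lsub0 opprB addrA lsub0 addrC; apply: h.
have : q = 0.
  apply: (arch_nat q g (pos_ge0 (v - p))) => n.
  case: n => [|n]; first by rewrite scale0r.
  have n0 : 0 < n.+1%:R :> R by rewrite ltr0n.
  have ni : 0 < n.+1%:R^-1 :> R by rewrite invr_gt0.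
  have := hq _ ni.
  by rewrite -(lscale _ _ _ n0) scalerA mulfV ?gt_eqF // scale1r.
move=> q0; rewrite -lsub0 -lNN opprB oppr0.
apply: (ltr q); first exact: lsupl.
by rewrite q0; apply: lrefl.
Qed.


Lemma closed_cone (f : nat -> E) z : f @ \oo --> z -> (forall n, le 0 (f n)) -> le 0 z.
Proof.
move=> fz f0; set m := sup (- z) 0.
have hm : forall n, `|m| <= `|z - f n|.
  move=> n; have e0 : sup (- f n) 0 = 0.
    by apply: sup_idr; have := lN _ _ (f0 n); rewrite oppr0.
  have := norm_sup_lip (- z) (- f n) 0.
  by rewrite e0 subr0 opprK addrC -opprB normrN.
have m0 : m = 0.
  apply/eqP; apply: contraT => mn0; have mp : 0 < `|m| by rewrite normr_gt0.
  have [N _ HN] := cvgr_dist_lt _ _ fz _ mp.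
  have := HN N (leqnn N).
  by rewrite ltNge hm.
rewrite -lNN oppr0; apply: (ltr m); first exact: lsupl.
by rewrite m0; apply: lrefl.
Qed.

Lemma series_ge0 (b : nat -> E) : (forall n, le 0 (b n)) -> forall N, le 0 (series b N).
Proof.
move=> b0; elim=> [|N IH]; first by rewrite /series /= big_geq //; apply: lrefl.
by rewrite seriesSr -[0]addr0; apply: lD.
Qed.

Lemma series_le_term (b : nat -> E) : (forall n, le 0 (b n)) ->
  forall n k, le (b n) (series b (k + n.+1)).
Proof.
move=> b0 n; elim=> [|k IH].
  rewrite ?add0n seriesSr; apply: (ltr (0 + b n)); first by rewrite add0r; apply: lrefl.
  by apply: lD2r; apply: series_ge0.
rewrite ?addSn seriesSr; apply: (ltr (series b (k + n.+1) + 0)); first by rewrite addr0.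
by apply: lD2l.
Qed.

Lemma series_dom (b : nat -> E) : (forall n, le 0 (b n)) ->
  (forall n, `|b n| <= (2^-1 : R) ^+ n) ->
  exists z, le 0 z /\ forall n, le (b n) z.
Proof.
move=> b0 bn.
have cv : cvgn (series b).
  apply: normed_cvg.
  apply: (@series_le_cvg R (fun n => `|b n|) (geometric 1 (2^-1 : R))).
  - by move=> n.
  - by move=> n; rewrite /geometric /= mul1r exprn_ge0 // invr_ge0.
  - by move=> n; rewrite /geometric /= mul1r.
  apply: is_cvg_geometric_series.
  by rewrite ger0_norm ?invr_ge0 // invf_lt1 // ltr1n.
have fz : series b @ \oo --> limn (series b) by apply: cv.
exists (limn (series b)); split.
  by apply: (closed_cone _ _ fz); apply: series_ge0.
move=> n; apply/lsub0.
apply: (closed_cone (fun k => series b (k + n.+1) - b n)).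
  apply: cvgB; last exact: cvg_cst.
  by rewrite (cvg_shiftn n.+1 (series b)).
by move=> k; apply/lsub0; apply: series_le_term.
Qed.


Lemma pick_j (K eps : R) : 0 < eps -> 0 <= K -> exists j : nat, K / j.+1%:R <= eps.
Proof.
move=> e0 K0.
have h : 0 <= K / eps by rewrite divr_ge0 // ltW.
have := archi_boundP h; set j := Num.bound _ => hj.
exists j; rewrite ler_pdivrMr ?ltr0Sn //.
rewrite ltr_pdivrMr // in hj.
apply: (le_trans (ltW hj)); rewrite mulrC ler_wpM2l ?(ltW e0) //.
by rewrite ler_nat.
Qed.

Definition ebound (a : nat -> E) (w : E) := exists N, forall n, (N <= n)%N -> le (a n) w.
Definition ebset (a : nat -> E) := {w : E | ebound a w}.
Definition eble (a : nat -> E) (w1 w2 : ebset a) := le (sval w2) (sval w1).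
Arguments eble {a}.
Lemma eble_refl a (w : ebset a) : eble w w. Proof. exact: lrefl. Qed.
Lemma eble_trans a (w1 w2 w3 : ebset a) : eble w1 w2 -> eble w2 w3 -> eble w1 w3.
Proof. by move=> h1 h2; apply: ltr h2 h1. Qed.
Lemma ebinh a Y : (forall n, le (a n) Y) -> exists w : ebset a, True.
Proof. by move=> h; exists (exist _ Y (ex_intro _ 0%N (fun n _ => h n))). Qed.
Lemma ebdir a (w1 w2 : ebset a) : exists w3, eble w1 w3 /\ eble w2 w3.
Proof.
case: w1 w2 => [x1 [N1 h1]] [x2 [N2 h2]].
have h3 : ebound a (inf x1 x2).
  exists (maxn N1 N2) => n; rewrite geq_max => /andP[n1 n2].
  by apply: linfP; [apply: h1|apply: h2].
exists (exist _ _ h3); split; rewrite /eble /=; [apply: linfl|apply: linfr].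
Qed.
Definition eb_dir a Y (hY : forall n, le (a n) Y) : directed_set :=
  @DirectedSet (ebset a) (@eble a) (@eble_refl a) (@eble_trans a) (ebinh a Y hY) (@ebdir a).

Lemma core (u : nat -> E) (z : E) : (forall n, le 0 (u n)) -> le 0 z ->
  (forall m n, (m < n)%N -> le (inf (u n) (u m)) (n.+1%:R^-1 *: z)) ->
  forall Y, le 0 Y -> order_conv B (D:=nat_dir) (fun n => inf (u n) Y) 0.
Proof.
move=> u0 z0 hz Y Y0.
set a := fun n => inf (u n) Y.
have a0 : forall n, le 0 (a n) by move=> n; apply: inf_ge0.
have aY : forall n, le (a n) Y by move=> n; apply: linfr.
exists (eb_dir _ _ aY), (fun w => sval w); split; last first.
  move=> [w [N hN]]; exists N => n /= hn.
  by rewrite subr0 abs_id //; apply: hN.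
split; first by move=> b1 b2.
split.
  by move=> [w [N hN]] /=; apply: (ltr (a N)) => //; apply: hN.
move=> v hv.
have hv1 : forall w, ebound a w -> le v w.
  by move=> w hw; apply: (hv (exist _ w hw)).
have hv2 : forall w, ebound a w -> le (sup v 0) w.
  move=> w hw; apply: lsupP; first exact: hv1.
  by case: hw => N hN; apply: (ltr (a N)) => //; apply: hN.
set v' := sup v 0.
have v'0 : le 0 v' by apply: pos_ge0.
suff : v' = 0 by move=> e; rewrite -e; apply: lsupl.
have stepA : forall m, inf v' (u m) = 0.
  move=> m.
  have hk : forall k : nat, le v' (sup (Y - k.+1%:R *: u m) 0).
    move=> k; apply: (arch_eps _ _ _ z0) => eps e0.
    have [j hj] := pick_j _ _ e0 (ler0n R k.+1).
    apply: (ltr (sup (Y - k.+1%:R *: u m) 0 + (k.+1%:R / j.+1%:R) *: z)); last first.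
      by apply: lD2l; apply: lscale_mono.
    apply: hv2; exists (maxn j m.+1) => n; rewrite geq_max => /andP[jn mn].
    apply: (ltr _ _ _ (inf_split (u n) Y (k.+1%:R *: u m))).
    rewrite addrC; apply: lD2l.
    have K1 : 1 <= k.+1%:R :> R by rewrite ler1n.
    apply: (ltr _ _ _ (inf_scale_ge1 _ (u n) (u m) K1 (u0 n))).
    apply: (ltr (k.+1%:R *: (n.+1%:R^-1 *: z))).
      by apply: ble_scale => //; apply: hz.
    rewrite scalerA; apply: lscale_mono => //.
    rewrite ler_wpM2l // lef_pV2 ?posrE ?ltr0Sn // ler_nat ltnS //.
  set t := inf v' (u m).
  have t0 : le 0 t by apply: inf_ge0.
  apply: (arch_nat t Y t0) => -[|k]; first by rewrite scale0r.
  set K := k.+1%:R : R.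
  have K1 : 1 <= K by rewrite ler1n.
  have K0 : 0 <= K by apply: le_trans K1.
  set P := sup (Y - K *: u m) 0.
  set Q := sup (- (Y - K *: u m)) 0.
  have PQ : inf P Q = 0 by apply: posneg.
  have Q0 : le 0 Q by apply: pos_ge0.
  have tP : le t P by apply: (ltr v'); [apply: linfl|apply: hk].
  have tQ : inf t Q = 0.
    apply: lanti; last by apply: inf_ge0.
    by rewrite -PQ; apply: linf_le => //; apply: lrefl.
  have KtQ : inf (K *: t) Q = 0.
    apply: lanti; last by apply: inf_ge0 => //; apply: scale_ge0.
    rewrite infC; apply: (ltr _ _ _ (inf_scale_ge1 _ Q t K1 Q0)).
    by rewrite infC tQ scaler0; apply: lrefl.
  apply: (disj_abs _ _ _ (scale_ge0 K0 t0) Y0 Q0 KtQ).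
  apply: (ltr (K *: u m)); first by apply: ble_scale => //; apply: linfr.
  apply: (ltr (Y + (K *: u m - Y))); first by rewrite addrC subrK; apply: lrefl.
  by apply: lD2l; rewrite -opprB; apply: lsupl.
have dis : forall n, inf (a n) v' = 0.
  move=> n; apply: lanti; last by apply: inf_ge0.
  rewrite -(stepA n) infC; apply: linf_le; first exact: lrefl.
  exact: linfl.
have ind : forall j : nat, (forall n, le (a n) (Y - j%:R *: v')) /\ le v' (Y - j%:R *: v').
  elim=> [|j [h1 h2]].
    rewrite scale0r subr0; split; first exact: aY.
    by apply: hv2; exists 0%N => n _; apply: aY.
  have h3 : forall n, le (a n) (Y - j.+1%:R *: v').
    move=> n; have := lsupP _ _ _ (h1 n) h2; rewrite -disj_sum // => h.
    have := lD2r (- v') h; rewrite addrK => h'.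
    by rewrite -natr1 scalerDl scale1r opprD addrA.
  split; first exact: h3.
  by apply: hv2; exists 0%N => n _; apply: h3.
apply: (arch_nat v' Y v'0) => -[|j]; first by rewrite scale0r.
have [_ h2] := ind j.
have := lD2r (j%:R *: v') h2; rewrite subrK => h.
by rewrite -natr1 scalerDl scale1r addrC.
Qed.


Lemma rec_seq (D : Type) (g : nat -> D -> E -> D) (a0 : D) (U : D -> E) :
  exists al : nat -> D, exists s : nat -> E, s 0%N = 0 /\ al 0%N = g 0%N a0 0 /\
    forall n, s n.+1 = s n + U (al n) /\ al n.+1 = g n.+1 (al n) (s n.+1).
Proof.
pose fix f (n : nat) : D * E := match n with
  | 0%N => (g 0%N a0 0, 0)
  | n'.+1 => let p := f n' in (g n'.+1 p.1 (p.2 + U p.1), p.2 + U p.1) end.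
by exists (fun n => (f n).1), (fun n => (f n).2).
Qed.

Lemma step_un (D : directed_set) (x : D -> E) (l : E) : un_conv B x l ->
  forall (e : R) (a : D) (s : E), 0 < e -> exists a' : D, dle a a' /\
    (~ has_largest D -> ~ dle a' a) /\ `|inf (abs (x a' - l)) (abs s)| < e.
Proof.
move=> H e a s e0; have [a0 Ha0] := H s e e0.
have [c [h1 h2]] := ddirected a0 a.
case: (pselect (has_largest D)) => hl.
  by exists c; split => //; split => //; apply: Ha0.
have [g hg] : exists g, ~ dle g a.
  by apply/existsNP => hall; apply: hl; exists a.
have [c' [h3 h4]] := ddirected c g.
exists c'; split; first exact: dle_trans h2 h3.
split; first by move=> _ hc; apply: hg; apply: dle_trans h4 hc.
by apply: Ha0; apply: dle_trans h1 h3.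
Qed.

Lemma part1 (D : directed_set) (x : D -> E) (l : E) : un_conv B x l ->
  exists al : nat -> D, embedded al /\ uo_conv (D := nat_dir) B (fun n => x (al n)) l.
Proof.
move=> H.
pose eps (n : nat) : R := (2^-1)^+n / n.+1%:R.
have eps0 : forall n, 0 < eps n.
  by move=> n; rewrite /eps divr_gt0 // exprn_gt0 // invr_gt0.
pose P n a s a' := dle a a' /\ (~ has_largest D -> ~ dle a' a) /\
   `|inf (abs (x a' - l)) (abs s)| < eps n.
have st : forall n a s, {a' | P n a s a'}.
  by move=> n a s; apply: cid; apply: step_un.
have [a0 _] := dinhabited D.
pose U a := abs (x a - l).
have [al [sq [s0 [al0 hrec]]]] := rec_seq _ (fun n a s => sval (st n a s)) a0 U.
have hP : forall n, P n.+1 (al n) (sq n.+1) (al n.+1).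
  by move=> n; have [_ ->] := hrec n; apply: svalP.
have hsmall : forall n, `|inf (U (al n)) (abs (sq n))| < eps n.
  case=> [|n]; first by rewrite s0 al0; have [_ []] := svalP (st 0%N a0 0).
  by have [_ []] := hP n.
exists al; split.
  split; first by move=> n; have [h1 _] := hP n.
  by move=> hl n; have [_ [h2 _]] := hP n; apply: h2.
have U0 : forall a, le 0 (U a) by move=> a; apply: abs_ge0.
have sq0 : forall n, le 0 (sq n).
  elim=> [|n IH]; first by rewrite s0; apply: lrefl.
  by have [-> _] := hrec n; rewrite -[0]addr0; apply: lD.
have sqm : forall m n, (m < n)%N -> le (U (al m)) (sq n).
  move=> m; elim=> [//|n IH]; rewrite ltnS leq_eqVlt => /orP[/eqP <-|mn].
    have [-> _] := hrec m; apply: (ltr (0 + U (al m))); first by rewrite add0r; apply: lrefl.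
    by apply: lD2r.
  have [-> _] := hrec n; apply: (ltr (sq n + 0)); first by rewrite addr0; apply: IH.
  by apply: lD2l.
pose b n := n.+1%:R *: inf (U (al n)) (sq n).
have b0 : forall n, le 0 (b n).
  by move=> n; apply: scale_ge0 => //; apply: inf_ge0.
have bn : forall n, `|b n| <= (2^-1 : R) ^+ n.
  move=> n; rewrite normrZ ger0_norm // mulrC; apply: ltW.
  by rewrite -ltr_pdivlMr // -(abs_id _ (sq0 n)); apply: hsmall.
have [z [z0 hz]] := series_dom b b0 bn.
move=> y.
apply: (core (fun n => U (al n)) z) => //; last exact: abs_ge0.
move=> m n mn.
apply: (ltr (inf (U (al n)) (sq n))).
  by apply: linf_le; [apply: lrefl|apply: sqm].
have hn : 0 < n.+1%:R :> R by [].
rewrite -(lscale _ _ _ hn) scalerA mulfV ?gt_eqF // scale1r.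
exact: hz.
Qed.


Lemma uo_un (OC : order_continuous_norm B) (x : nat -> E) (l : E) :
  uo_conv (D := nat_dir) B x l -> un_conv (D := nat_dir) B x l.
Proof.
move=> H y e e0; have [D' [w [hdec dom]]] := H y.
have [b0 Hb0] := OC D' w hdec e e0.
have [N HN] := dom b0.
exists N => n hn; have h := HN n hn.
rewrite subr0 in h.
apply: le_lt_trans (Hb0 b0 (dle_refl b0)).
case: hdec => _ [w0 _].
apply: (@bnorm_mono _ _ B); change (le (abs (inf (abs (x n - l)) (abs y))) (abs (w b0))).
by rewrite (abs_id _ (w0 b0)).
Qed.

Lemma incr_ge (phi : nat -> nat) : strictly_incr phi -> forall n, (n <= phi n)%N.
Proof.
move=> h; elim=> [//|n IH]; apply: leq_ltn_trans IH _; exact: h.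
Qed.

Lemma part3b (OC : order_continuous_norm B) (x : nat -> E) (l : E) :
  (forall phi : nat -> nat, strictly_incr phi ->
     exists psi : nat -> nat, strictly_incr psi /\
       uo_conv (D := nat_dir) B (fun n => x (phi (psi n))) l) ->
  un_conv (D := nat_dir) B x l.
Proof.
move=> H y e e0.
pose A n := `|inf (abs (x n - l)) (abs y)|.
apply: contrapT => hn.
have hg : forall N : nat, exists n : nat, (N <= n)%N /\ e <= A n.
  move=> N; apply: contrapT => hN; apply: hn; exists N => n /= Nn.
  rewrite ltNge; apply/negP => en; apply: hN; exists n; split => //.
have g : forall N : nat, {n : nat | (N <= n)%N /\ e <= A n}.
  by move=> N; apply: cid; apply: hg.
pose phi := fix f (k : nat) : nat := match k with
  | 0%N => sval (g 0%N) | k'.+1 => sval (g (f k').+1) end.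
have phiA : forall k, e <= A (phi k).
  by case=> [|k] /=; [have [_ ?] := svalP (g 0%N)|have [_ ?] := svalP (g (phi k).+1)].
have phiS : strictly_incr phi.
  by move=> k /=; have [? _] := svalP (g (phi k).+1).
have [psi [_ hpsi]] := H phi phiS.
have [N HN] := uo_un OC _ _ hpsi y e e0.
have := HN N (leqnn N); rewrite ltNge.
by rewrite (phiA (psi N)).
Qed.

End BLT.

Theorem theorem5p2 (R : realType) (E : completeNormedModType R)
  (B : banach_lattice E) :
  (* (1) *)
  (forall (D : directed_set) (x : D -> E) (l : E), un_conv B x l ->
     exists al : nat -> D, embedded al /\
       uo_conv (D := nat_dir) B (fun n => x (al n)) l) /\
  (order_continuous_norm B ->
    (* (2) *)
    (forall (D : directed_set) (x : D -> E) (l : E), un_conv B x l ->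
       exists al : nat -> D, embedded al /\
         uo_conv (D := nat_dir) B (fun n => x (al n)) l /\
         un_conv (D := nat_dir) B (fun n => x (al n)) l) /\
    (* (3) *)
    (forall (x : nat -> E) (l : E),
       un_conv (D := nat_dir) B x l <->
       (forall phi : nat -> nat, strictly_incr phi ->
          exists psi : nat -> nat, strictly_incr psi /\
            uo_conv (D := nat_dir) B (fun n => x (phi (psi n))) l))).
Proof.
split; first exact: part1.
move=> OC; split.
  move=> D x l H; have [al [h1 h2]] := @part1 _ _ B _ _ _ H.
  by exists al; split => //; split => //; apply: uo_un.
move=> x l; split; last exact: part3b.
move=> H phi phiS.
have Hphi : un_conv (D := nat_dir) B (fun n => x (phi n)) l.
  move=> y e e0; have [N HN] := H y e e0.
  exists N => n /= hn; apply: HN; exact: leq_trans hn (incr_ge _ phiS n).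
have [al [[h1 h2] h3]] := @part1 _ _ B _ _ _ Hphi.
exists al; split => // n.
have nl : ~ has_largest nat_dir.
  by case=> m hm; have := hm m.+1; rewrite /= ltnn.
have := h2 nl n; rewrite /= => h; rewrite ltnNge; apply/negP => h'; exact: h h'.
Qed.
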